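(* Let $G=G_1\ast\cdots\ast G_n$ be a free product of finitely many nontrivial finite groups. Fix an enumeration (well order) $g_1,g_2,g_3,\dots$ of $G$ and order $\mathbb{Z}^{G}$ lexicographically. For a nuclear vertex $v=[\mathcal{H},\underline{\underline{0}}]$ of $L(G)$ define $\|v\|\in\mathbb{Z}^G$ by $\|v\|_i=|g_i|_{\mathcal{H}}$. Then this norm well orders the nuclear vertices of $L(G)$, i.e. $u<v\iff\|u\|<\|v\|$ is a well-ordering of the set of nuclear vertices.
   Context: A basis of $G$ is a set $\mathcal{H}=\{H_1,\dots,H_n\}$ of subgroups with $H_i$ conjugate to $G_i$ and $G=H_1\ast\cdots\ast H_n$; $|g|_{\mathcal{H}}$ is the (non-cyclic) length of the reduced word for $g$ in the free product $H_1\ast\cdots\ast H_n$. A pointed labelled tree is a finite bipartite tree whose vertices are labelled (labels $\ast,1,\dots,n$, each once) or unlabelled, each edge joining a labelled and an unlabelled vertex, unlabelled vertices of valence at least 2, $\ast$ of valence 1. For a labelled vertex $k$, the petals at $k$ are the label sets of components of $T-\{k\}$, forming a partition $\underline{\underline{A}}(k)$; the tree is identified with the family $\underline{\underline{A}}$; $\underline{\underline{A}}\le\underline{\underline{B}}$ means each petal of $\underline{\underline{A}}(k)$ is a union of petals of $\underline{\underline{B}}(k)$. The trivial tree $\underline{\underline{0}}$ has a single unlabelled vertex adjacent to all labelled vertices. For a basis $\mathcal{H}$, $k$ and $x_j\in H_k$ ($x_k=1$), the symmetric Whitehead automorphism $(\mathcal{H},x)$ acts on $H_j$ by $h\mapsto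 x_jhx_j^{-1}$, trivially on $H_k$; it is carried by $(\mathcal{H},\underline{\underline{A}})$ if $x$ is constant on petals of $\underline{\underline{A}}(k)$ and trivial on the petal containing $\ast$. Pairs $(\mathcal{H},\underline{\underline{A}})$, $(\rho(\mathcal{H}),\underline{\underline{A}})$ with $\rho$ a product of carried symmetric Whitehead automorphisms are identified; classes ordered by: $[\mathcal{H},\underline{\underline{A}}]\le[\mathcal{K},\underline{\underline{B}}]$ iff they have representatives with common basis and $\underline{\underline{A}}\le\underline{\underline{B}}$. $L(G)$ is the realization of this poset. A nuclear vertex is one of the form $[\mathcal{H},\underline{\underline{0}}]$ (it is determined by the basis $\mathcal{H}$). *)

(* Defs.v *)
From mathcomp Require Import all_boot.
From Stdlib Require Import ClassicalEpsilon.

Set Implicit Arguments.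
Unset Strict Implicit.
Unset Printing Implicit Defensive.

Local Open Scope group_scope.

Section FreeProducts.

Variable G : groupType.

Definition is_subgroup (S : G -> Prop) : Prop :=
  [/\ S 1, (forall x y, S x -> S y -> S (x * y)) & (forall x, S x -> S x^-1)].

Variable n : nat.

Definition word := seq ('I_n * G).

Definition word_val (w : word) : G := foldr (fun p acc => p.2 * acc) 1 w.

Definition reduced_word (H : 'I_n -> G -> Prop) (w : word) : Prop :=
  (forall p, p \in w -> H p.1 p.2 /\ p.2 <> 1) /\
  sorted (fun i j : 'I_n => i != j) (map fst w).

Definition free_product_decomp (H : 'I_n -> G -> Prop) : Prop :=
  (forall i, is_subgroup (H i)) /\
  (forall g : G, exists w, reduced_word H w /\ word_val w = g /\
     forall w', reduced_word H w' -> word_val w' = g -> w' = w).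

Definition word_length (H : 'I_n -> G -> Prop) (g : G) : nat :=
  epsilon (inhabits 0%N)
    (fun k => exists w, reduced_word H w /\ word_val w = g /\ size w = k).

Definition conjugate_subgroups (H K : G -> Prop) : Prop :=
  exists x : G, forall y, H y <-> K (x^-1 * y * x).

Definition basis (Gs H : 'I_n -> G -> Prop) : Prop :=
  (forall i, conjugate_subgroups (H i) (Gs i)) /\ free_product_decomp H.

Definition same_basis (H K : 'I_n -> G -> Prop) : Prop :=
  forall i x, H i x <-> K i x.

(* The norm ||[H,0]|| in Z^G (values are word lengths, hence in nat). *)
Definition basis_norm (H : 'I_n -> G -> Prop) : G -> nat := word_length H.

(* Lexicographic order on Z^G (here nat^G) w.r.t. the enumeration of G given
   by the injective position map idx : G -> nat (g comes before h iff
   idx g < idx h). *)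
Definition lex_lt (idx : G -> nat) (a b : G -> nat) : Prop :=
  exists g, (a g < b g)%N /\ forall h, (idx h < idx g)%N -> a h = b h.

Definition finite_pred (S : G -> Prop) : Prop :=
  exists s : seq G, forall x, S x -> x \in s.

Definition nontrivial_pred (S : G -> Prop) : Prop :=
  exists x, S x /\ x <> 1.

End FreeProducts.

(* Nuclear vertices [H,0] of L(G) are in bijection with bases H (the trivial
   tree carries only the trivial symmetric Whitehead automorphism), so we
   represent them by bases. *)
Definition nuclear_vertex (G : groupType) (n : nat) (Gs : 'I_n -> G -> Prop) :=
  {H : 'I_n -> G -> Prop | basis Gs H}.

Definition nuclear_lt (G : groupType) (n : nat) (Gs : 'I_n -> G -> Prop)
  (idx : G -> nat) (u v : nuclear_vertex Gs) : Prop :=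
  lex_lt idx (basis_norm (proj1_sig u)) (basis_norm (proj1_sig v)).

(* Main.v *)
Require Import Defs.
From mathcomp Require Import all_boot.
From Stdlib Require Import Wellfounded.
From mathcomp Require Import zify.
From Stdlib Require Import ClassicalEpsilon Classical.


Set Implicit Arguments.
Unset Strict Implicit.
Unset Printing Implicit Defensive.
Local Open Scope group_scope.

Section Red.
Variable G : groupType.
Variable n : nat.

Definition step (p : 'I_n * G) (r : word G n) : word G n :=
  if p.2 == 1 then r else
  match r with
  | [::] => [:: p]
  | q :: r' => if p.1 == q.1 then (if p.2 * q.2 == 1 then r' else (p.1, p.2 * q.2) :: r')
               else p :: r
  end.
Definition red (w : word G n) := foldr step [::] w.

Definition mapF (F : 'I_n -> G -> G) (w : word G n) : word G n :=
  map (fun p => (p.1, F p.1 p.2)) w.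

Lemma word_val_cat (w1 w2 : word G n) : word_val (w1 ++ w2) = word_val w1 * word_val w2.
Proof. elim: w1 => [|p w IH] /=; [by rewrite mul1g | by rewrite IH mulgA]. Qed.

Lemma mapF_cat F (w1 w2 : word G n) : mapF F (w1 ++ w2) = mapF F w1 ++ mapF F w2.
Proof. exact: map_cat. Qed.

Section F.
Variable F : 'I_n -> G -> G.
Hypothesis F1 : forall k, F k 1 = 1.
Hypothesis FM : forall k y z, F k (y * z) = F k y * F k z.

Lemma step_valF p r :
  word_val (mapF F (step p r)) = F p.1 p.2 * word_val (mapF F r).
Proof.
case: p => i y; rewrite /step /=.
case: eqP => [->|_]; first by rewrite F1 mul1g.
case: r => [|[j z] r'] //=.
case: eqP => [<-|_] //=.
case: eqP => [yz1|_] /=.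
  by rewrite mulgA -FM yz1 F1 mul1g.
by rewrite mulgA -FM.
Qed.

Lemma red_valF w : word_val (mapF F (red w)) = word_val (mapF F w).
Proof. by elim: w => [|p w IH] //=; rewrite step_valF IH. Qed.
End F.

Lemma mapF_id w : mapF (fun _ y => y) w = w.
Proof. by elim: w => [|[i y] w IH] //=; rewrite IH. Qed.

Lemma red_val w : word_val (red w) = word_val w.
Proof.
have := @red_valF (fun _ y => y) (fun _ => erefl) (fun _ _ _ => erefl) w.
by rewrite !mapF_id.
Qed.

Lemma step_reduced (H : 'I_n -> G -> Prop) p r :
  is_subgroup (H p.1) -> H p.1 p.2 -> reduced_word H r -> reduced_word H (step p r).
Proof.
case: p => i y /= [H1 HM HV] Hy [Hr Hs]; rewrite /step /=.
case: eqP => [_|y1]; first by split.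
case: r Hr Hs => [|[j z] r'] Hr Hs.
  split=> //= q; rewrite inE => /eqP -> //.
have Hz : H j z /\ z <> 1 by apply: (Hr (j, z)); rewrite inE eqxx.
have Hr' : forall q, q \in r' -> H q.1 q.2 /\ q.2 <> 1.
  by move=> q qr; apply: Hr; rewrite inE qr orbT.
case: eqP => [eij|nij] /=.
  move: eij => /= eij; subst j. case: eqP => [_|yz1].
    split=> //. by move: Hs => /= /path_sorted.
  split=> //= q; rewrite inE => /orP [/eqP -> /=|]; last exact: Hr'.
  split=> //; apply: HM => //; exact: Hz.1.
split.
  move=> q; rewrite inE => /orP [/eqP -> //|]; exact: Hr.
by apply/andP; split; [apply/eqP | exact: Hs].
Qed.

Lemma red_reduced (H : 'I_n -> G -> Prop) w :
  (forall i, is_subgroup (H i)) -> (forall q, q \in w -> H q.1 q.2) ->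
  reduced_word H (red w).
Proof.
move=> Hsub; elim: w => [|p w IH] Hw /=.
  by split.
apply: step_reduced => //; first by apply: Hw; rewrite inE eqxx.
by apply: IH => q qw; apply: Hw; rewrite inE qw orbT.
Qed.

Lemma uniq_red (H : 'I_n -> G -> Prop) w1 w2 :
  free_product_decomp H -> reduced_word H w1 -> reduced_word H w2 ->
  word_val w1 = word_val w2 -> w1 = w2.
Proof.
move=> [_ Hu] r1 r2 e.
have [w [_ [_ U]]] := Hu (word_val w1).
by rewrite (U _ r1 erefl) (U _ r2 (esym e)).
Qed.

Lemma wl_eq (H : 'I_n -> G -> Prop) w :
  free_product_decomp H -> reduced_word H w -> word_length H (word_val w) = size w.
Proof.
move=> fp rw; rewrite /word_length.
set P := (fun k => _).
have : P (epsilon (inhabits 0%N) P).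
  by apply: epsilon_spec; exists (size w), w.
move=> [w' [rw' [v' <-]]].
by rewrite (uniq_red fp rw' rw v').
Qed.

Lemma wl_spec (H : 'I_n -> G -> Prop) g :
  free_product_decomp H -> exists w, reduced_word H w /\ word_val w = g /\ size w = word_length H g.
Proof.
move=> fp; have [w [rw [vw _]]] := fp.2 g.
by exists w; split=> //; split=> //; rewrite -vw wl_eq.
Qed.

End Red.

Set Implicit Arguments.
Unset Strict Implicit.
Unset Printing Implicit Defensive.
Local Open Scope group_scope.

Section Main.
Variable G : groupType.
Variable n : nat.
Variable Gs : 'I_n -> G -> Prop.
Hypothesis Hfree : free_product_decomp Gs.

Definition projF (i : 'I_n) : 'I_n -> G -> G := fun k y => if k == i then y else 1.

Lemma projF1 i k : projF i k 1 = 1. Proof. by rewrite /projF; case: ifP. Qed.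
Lemma projFM i k y z : projF i k (y * z) = projF i k y * projF i k z.
Proof. by rewrite /projF; case: ifP => //; rewrite mulg1. Qed.

Lemma red_letters (H : 'I_n -> G -> Prop) w :
  reduced_word H w -> forall q, q \in w -> H q.1 q.2.
Proof. by move=> [Hr _] q /Hr []. Qed.

Lemma hom_Gs F (F1 : forall k, F k 1 = 1)
  (FM : forall k y z, F k (y * z) = F k y * F k z) (W w0 : word G n) :
  (forall q, q \in W -> Gs q.1 q.2) -> reduced_word Gs w0 -> word_val w0 = word_val W ->
  word_val (mapF F W) = word_val (mapF F w0).
Proof.
move=> HW r0 e.
have rr := red_reduced Hfree.1 HW.
have -> : w0 = red W by apply: uniq_red Hfree r0 rr _; rewrite red_val.
by rewrite red_valF.
Qed.

Lemma noconj i j a z : Gs i a -> a <> 1 -> Gs j (z^-1 * a * z) -> i = j.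
Proof.
move=> Ga a1 Gb; apply/eqP/negP => /negP nij.
have [wz [rz [vz _]]] := Hfree.2 z.
have [wv [rv [vv _]]] := Hfree.2 z^-1.
have b1 : z^-1 * a * z <> 1.
  move=> e; apply: a1.
  have -> : a = z * (z^-1 * a * z) * z^-1 by rewrite !mulgA mulgV mul1g mulgK.
  by rewrite e mulg1 mulgV.
set A := word_val (mapF (projF i) wv).
set B := word_val (mapF (projF i) wz).
have l1 : forall q, q \in wv ++ wz -> Gs q.1 q.2.
  by move=> q; rewrite mem_cat => /orP [] /red_letters; [apply | apply].
have AB : A * B = 1.
  have := @hom_Gs (projF i) (projF1 i) (@projFM i) _ [::] l1.
  rewrite !mapF_cat !word_val_cat /= => h; apply: h; first by split.
  by rewrite vv vz mulVg.
set W := wv ++ [:: (i, a)] ++ wz.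
have l2 : forall q, q \in W -> Gs q.1 q.2.
  move=> q; rewrite !mem_cat => /orP [/red_letters|/orP [|/red_letters]]; try by apply.
  by rewrite inE => /eqP ->.
have r1 : reduced_word Gs [:: (j, z^-1 * a * z)].
  split=> //= q; rewrite inE => /eqP -> //.
have := @hom_Gs (projF i) (projF1 i) (@projFM i) W _ l2 r1.
rewrite eq_sym in nij; rewrite /W !mapF_cat !word_val_cat /= /projF eqxx (negbTE (nij : j != i)) -/A -/B !mulg1 => h.
have {}h : A * (a * B) = 1 by apply: h; rewrite vv vz !mulgA.
apply: a1.
have BA : B = A^-1 by rewrite -(mulKg A B) AB mulg1.
move: h; rewrite BA mulgA => /eqP; rewrite mulg_eq1 invgK => /eqP.
by rewrite -{2}(mulg1 A) => /mulgI.
Qed.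

Definition conjF (x : 'I_n -> G) : 'I_n -> G -> G := fun k y => (x k)^-1 * y * x k.
Lemma conjF1 x k : conjF x k 1 = 1. Proof. by rewrite /conjF mulg1 mulVg. Qed.
Lemma conjFM x k y z : conjF x k (y * z) = conjF x k y * conjF x k z.
Proof. by rewrite /conjF !mulgA mulgK. Qed.

Definition conjs (H : 'I_n -> G -> Prop) (x : 'I_n -> G) :=
  forall i y, H i y <-> Gs i ((x i)^-1 * y * x i).

Lemma conjs_ex H : basis Gs H -> exists x, conjs H x.
Proof.
move=> [Hc _].
exists (fun i => epsilon (inhabits 1) (fun x => forall y, H i y <-> Gs i (x^-1 * y * x))).
move=> i; apply: (epsilon_spec (inhabits 1) (fun x => forall y, H i y <-> Gs i (x^-1 * y * x))).
exact: Hc.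
Qed.

Lemma map_reduced H x w : conjs H x -> reduced_word H w -> reduced_word Gs (mapF (conjF x) w).
Proof.
move=> Hx [Hr Hs]; split.
  move=> q /mapP [p pw ->] /=; have [Hp p1] := Hr p pw.
  split; first by apply/Hx.
  rewrite /conjF => e; apply: p1.
  have -> : p.2 = x p.1 * ((x p.1)^-1 * p.2 * x p.1) * (x p.1)^-1
    by rewrite !mulgA mulgV mul1g mulgK.
  by rewrite e mulg1 mulgV.
by rewrite /mapF -map_comp.
Qed.

End Main.

Set Implicit Arguments.
Unset Strict Implicit.
Unset Printing Implicit Defensive.
Local Open Scope group_scope.

Section Main3.
Variable G : groupType.
Variable n : nat.
Variable Gs : 'I_n -> G -> Prop.
Hypothesis Hfree : free_product_decomp Gs.

Lemma eqnorm_same H K : basis Gs H -> basis Gs K ->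
  (forall g, word_length H g = word_length K g) -> same_basis H K.
Proof.
suff main : forall H K, basis Gs H -> basis Gs K ->
  (forall g, word_length H g = word_length K g) -> forall i y, H i y -> K i y.
  move=> bH bK e i y; split; first exact: main.
  by apply: main => // g; rewrite e.
clear H K; move=> H K bH bK e i y Hy.
have [x Hx] := conjs_ex bH; have [x' Hx'] := conjs_ex bK.
have [Hs Hu] := bH.2; have [Ks Ku] := bK.2.
have [y1|y1] := eqVneq y 1.
  by rewrite y1; case: (Ks i).
have rw : reduced_word H [:: (i, y)].
  split=> //= q; rewrite inE => /eqP -> /=; split=> //; exact/eqP.
have := wl_eq bH.2 rw; rewrite /= mulg1 e => l1.
have [w [rw' [vw sw]]] := wl_spec y bK.2.
move: sw; rewrite l1; case: w rw' vw => [|[j z] [|]] //= rw' vw _.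
rewrite mulg1 in vw; subst z.
case: rw' => Hr' _; have [Kj _] := Hr' (j, y) (mem_head _ _).
suff eij : i = j by rewrite eij.
apply: (@noconj _ _ _ Hfree i j ((x i)^-1 * y * x i) ((x i)^-1 * x' j)).
- exact/Hx.
- move=> e1; move/eqP: y1; apply.
  have -> : y = x i * ((x i)^-1 * y * x i) * (x i)^-1 by rewrite !mulgA mulgV mul1g mulgK.
  by rewrite e1 mulg1 mulgV.
- have := (Hx' j y).1 Kj.
  congr (Gs j _).
  by rewrite invgM invgK !mulgA !mulgK.
Qed.


Definition Ppsi (H : 'I_n -> G -> Prop) (x : 'I_n -> G) (s r : G) :=
  forall w, reduced_word H w -> word_val w = s -> word_val (mapF (conjF x) w) = r.

Lemma same_tuple_norm (S : seq G) H K x x' : basis Gs H -> basis Gs K ->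
  conjs Gs H x -> conjs Gs K x' -> (forall i y, Gs i y -> y \in S) ->
  (forall s, s \in S -> exists r, Ppsi H x s r /\ Ppsi K x' s r) ->
  forall g, word_length H g = word_length K g.
Proof.
move=> bH bK Hx Kx SG SP g.
have build : forall al : word G n, (forall q, q \in al -> Gs q.1 q.2) ->
  exists RH RK, (forall q, q \in RH -> H q.1 q.2) /\ (forall q, q \in RK -> K q.1 q.2) /\
    word_val RH = word_val al /\ word_val RK = word_val al /\
    word_val (mapF (conjF x) RH) = word_val (mapF (conjF x') RK).
  elim=> [|[i s] al IH] Hal.
    by exists [::], [::].
  have [|RH [RK [h1 [h2 [h3 [h4 h5]]]]]] := IH.
    by move=> q qa; apply: Hal; rewrite inE qa orbT.
  have Gis : Gs i s by apply: (Hal (i, s)); rewrite inE eqxx.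
  have [r [Pr1 Pr2]] := SP s (SG _ _ Gis).
  have [rH [rrH [vH _]]] := bH.2.2 s.
  have [rK [rrK [vK _]]] := bK.2.2 s.
  exists (rH ++ RH), (rK ++ RK); split; last split; last split; last split.
  - move=> q; rewrite mem_cat => /orP [/(red_letters rrH)|/h1] //.
  - move=> q; rewrite mem_cat => /orP [/(red_letters rrK)|/h2] //.
  - by rewrite word_val_cat vH h3.
  - by rewrite word_val_cat vK h4.
  - by rewrite !mapF_cat !word_val_cat h5 (Pr1 _ rrH vH) (Pr2 _ rrK vK).
have [al [ral [val _]]] := Hfree.2 g.
have [RH [RK [h1 [h2 [h3 [h4 h5]]]]]] := build al (red_letters ral).
have rH := red_reduced bH.2.1 h1.
have rK := red_reduced bK.2.1 h2.
have vH : word_val (red RH) = g by rewrite red_val h3.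
have vK : word_val (red RK) = g by rewrite red_val h4.
rewrite -{1}vH -vK (wl_eq bH.2 rH) (wl_eq bK.2 rK).
have e : mapF (conjF x) (red RH) = mapF (conjF x') (red RK).
  apply: (uniq_red Hfree (map_reduced Hx rH) (map_reduced Kx rK)).
  by rewrite !red_valF //; exact: conjF1 || exact: conjFM.
by rewrite -(size_map (fun p => (p.1, conjF x p.1 p.2))) -(size_map (fun p => (p.1, conjF x' p.1 p.2)) (red RK)); exact: (congr1 size e).
Qed.

End Main3.

Set Implicit Arguments.
Unset Strict Implicit.
Unset Printing Implicit Defensive.

Section Lex.
Variable G : groupType.
Variable idx : G -> nat.

Lemma lex_eq_irr a b : (forall g, a g = b g) -> ~ lex_lt idx a b.
Proof. by move=> e [g [lt _]]; move: lt; rewrite e ltnn. Qed.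

Lemma lex_trans (Hidx : injective idx) a b c : lex_lt idx a b -> lex_lt idx b c -> lex_lt idx a c.
Proof.
move=> [g1 [l1 e1]] [g2 [l2 e2]].
have [lt|gt|eq] := ltngtP (idx g1) (idx g2).
- exists g1; split; first by rewrite -(e2 _ lt).
  by move=> h hl; rewrite e1 // e2 //; apply: ltn_trans hl lt.
- exists g2; split; first by rewrite (e1 _ gt).
  by move=> h hl; rewrite e1 ?e2 //; apply: ltn_trans hl gt.
- have eg := Hidx _ _ eq; subst g2.
  exists g1; split; first by apply: ltn_trans l1 l2.
  by move=> h hl; rewrite e1 ?e2.
Qed.

Lemma ex_min_idx (P : G -> Prop) : (exists g, P g) ->
  exists g, P g /\ forall h, idx h < idx g -> ~ P h.
Proof.
move=> [g Pg].
suff : forall k g, idx g = k -> P g -> exists g, P g /\ forall h, idx h < idx g -> ~ P h.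
  by move=> /(_ _ g erefl Pg).
elim/ltn_ind => k IH g0 ek Pg0.
have [[h [hl Ph]]|none] := classic (exists h, idx h < k /\ P h).
  exact: IH hl h erefl Ph.
exists g0; split=> // h hl Ph; apply: none; exists h; split=> //; by rewrite -ek.
Qed.

Lemma lex_total a b : [\/ lex_lt idx a b, lex_lt idx b a | forall g, a g = b g].
Proof.
have [e|ne] := classic (forall g, a g = b g); first by constructor 3.
have [g [dg mg]] := ex_min_idx (not_all_ex_not _ _ ne).
have agree : forall h, idx h < idx g -> a h = b h.
  by move=> h hl; apply: NNPP => d; exact: mg hl d.
have [lt|gt|eq] := ltngtP (a g) (b g).
- by constructor 1; exists g.
- by constructor 2; exists g; split=> // h hl; rewrite agree.
- by case: dg.
Qed.

End Lex.

Section LexM.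
Definition agree (m : nat) (a b : nat -> nat) := forall j, j < m -> a j = b j.
Definition lexm (m : nat) (a b : nat -> nat) :=
  exists k, k < m /\ a k < b k /\ forall j, j < k -> a j = b j.

Lemma lexm_agree m a b b' : agree m b b' -> lexm m a b -> lexm m a b'.
Proof.
move=> ag [k [km [l e]]]; exists k; split=> //; split; first by rewrite -ag.
by move=> j jk; rewrite e // ag //; apply: ltn_trans jk km.
Qed.

Lemma wf_lexm m : well_founded (lexm m).
Proof.
elim: m => [|m IH].
  by move=> a; constructor => b [k [//]].
suff key : forall a, Acc (lexm m) a -> forall N a', agree m a' a -> a' m = N -> Acc (lexm m.+1) a'.
  by move=> a; apply: (key a (IH a) (a m) a) => // j.
move=> a; elim=> {}a _ IH1 N; elim/ltn_ind: N => N IH2 a' ag eN.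
constructor=> b [k [km [l e]]].
have [kl|km'] := ltnP k m.
  apply: (IH1 b _ (b m) b) => // ; apply: lexm_agree ag _.
  by exists k.
have ekm : k = m by apply/eqP; rewrite eqn_leq km'; rewrite ltnS in km; rewrite km.
subst k.
apply: (IH2 (b m) _ b) => //; first by rewrite -eN.
by move=> j jm; rewrite e // ag.
Qed.
End LexM.

Section Count.
Variable T : eqType.
Definition pb (P : T -> Prop) (t : T) : bool :=
  if excluded_middle_informative (P t) then true else false.
Definition cntP (P : T -> Prop) (s : seq T) := count (pb P) s.

Lemma pbP P t : pb P t <-> P t.
Proof. by rewrite /pb; case: excluded_middle_informative. Qed.

Lemma cnt_le (P Q : T -> Prop) s : (forall t, t \in s -> P t -> Q t) -> cntP P s <= cntP Q s.
Proof.
elim: s => [|t s IH] //= h.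
have h' : forall t, t \in s -> P t -> Q t by move=> u us; apply: h; rewrite inE us orbT.
have := IH h'; rewrite /cntP.
have : pb P t -> pb Q t by move=> /pbP Pt; apply/pbP; apply: h => //; rewrite inE eqxx.
case: (pb P t); case: (pb Q t) => //= ht; try lia; by have := ht isT.
Qed.

Lemma cnt_lt (P Q : T -> Prop) s t0 : (forall t, t \in s -> P t -> Q t) ->
  t0 \in s -> Q t0 -> ~ P t0 -> cntP P s < cntP Q s.
Proof.
elim: s => [|t s IH] //= h.
have h' : forall t, t \in s -> P t -> Q t by move=> u us; apply: h; rewrite inE us orbT.
rewrite inE => /orP [/eqP ->|ins] Qt Pt; rewrite /cntP /=.
  have -> : pb P t = false by apply/negP => /pbP.
  have -> : pb Q t = true by apply/pbP.
  have := cnt_le h'; rewrite /cntP; lia.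
have := IH h' ins Qt Pt; rewrite /cntP.
have : pb P t -> pb Q t by move=> /pbP Pt'; apply/pbP; apply: h => //; rewrite inE eqxx.
case: (pb P t); case: (pb Q t) => //= ht; try lia; by have := ht isT.
Qed.

Fixpoint allw (A : seq T) (k : nat) : seq (seq T) :=
  match k with
  | 0 => [:: [::]]
  | k.+1 => [::] :: flatten [seq [seq a :: t | t <- allw A k] | a <- A]
  end.

Lemma allwP A k t : size t <= k -> all (mem A) t -> t \in allw A k.
Proof.
elim: k t => [|k IH] [|a t] //= sz /andP [aA tA].
rewrite inE /=; apply/flatten_mapP; exists a => //.
by apply: map_f; apply: IH.
Qed.
End Count.

Set Implicit Arguments.
Unset Strict Implicit.
Unset Printing Implicit Defensive.
Local Open Scope group_scope.

Section Final.
Variable G : groupType.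
Variable n : nat.
Variable Gs : 'I_n -> G -> Prop.
Hypothesis Hfin : forall i, finite_pred (Gs i).
Hypothesis Hfree : free_product_decomp Gs.
Variable idx : G -> nat.
Hypothesis Hidx : injective idx.

Definition L (i : 'I_n) : seq G :=
  epsilon (inhabits [::]) (fun s : seq G => forall x, Gs i x -> x \in s).
Lemma LP i x : Gs i x -> x \in L i.
Proof. by apply: (epsilon_spec (inhabits [::]) (fun s : seq G => forall x, Gs i x -> x \in s)); apply: Hfin. Qed.

Definition S : seq G := flatten [seq L i | i <- enum 'I_n].
Lemma SG i y : Gs i y -> y \in S.
Proof. by move=> Gy; apply/flatten_mapP; exists i; [rewrite mem_enum | apply: LP]. Qed.

Definition A : seq ('I_n * G) := flatten [seq [seq (i, y) | y <- L i] | i <- enum 'I_n].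
Lemma AG i y : Gs i y -> (i, y) \in A.
Proof. by move=> Gy; apply/flatten_mapP; exists i; [rewrite mem_enum | apply: map_f; apply: LP]. Qed.

Definition M := \max_(s <- S) idx s.
Definition m := M.+1.
Lemma idx_S s : s \in S -> idx s < m.
Proof. by move=> sS; rewrite ltnS; apply: (bigmaxn_sup_seq s sS) => //. Qed.

Definition ginv k := epsilon (inhabits (1 : G)) (fun g => idx g = k).
Definition cvec (f : G -> nat) k := if idx (ginv k) == k then f (ginv k) else 0%N.

Lemma ginv_idx g : ginv (idx g) = g.
Proof.
apply: Hidx; apply: (epsilon_spec (inhabits (1 : G)) (fun h => idx h = idx g)).
by exists g.
Qed.

Lemma cvec_idx f g : cvec f (idx g) = f g.
Proof. by rewrite /cvec ginv_idx eqxx. Qed.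

Lemma lexstep a b : lex_lt idx a b -> lexm m (cvec a) (cvec b) \/ agree m (cvec a) (cvec b).
Proof.
move=> [g [lt e]].
have below : forall j, j < idx g -> cvec a j = cvec b j.
  move=> j jl; rewrite /cvec; case: eqP => // ej; rewrite e //; by rewrite ej.
have [gm|gm] := ltnP (idx g) m.
  left; exists (idx g); split=> //; split=> //; by rewrite !cvec_idx.
right=> j jm; apply: below; exact: leq_trans jm gm.
Qed.

Notation NV := (nuclear_vertex Gs).
Definition f (u : NV) : G -> nat := basis_norm (proj1_sig u).
Definition C (u : NV) := \max_(k < m) cvec (f u) k.
Definition W c := [seq word_val w | w <- allw A c].
Definition T c := allw (W c) (size S).
Definition hasT (v : NV) (t : seq G) := exists x, conjs Gs (proj1_sig v) x /\ size t = size S /\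
  forall k, k < size S -> Ppsi (proj1_sig v) x (nth 1 S k) (nth 1 t k).
Definition Q (u : NV) (t : seq G) := exists v : NV,
  agree m (cvec (f v)) (cvec (f u)) /\ nuclear_lt idx v u /\ hasT v t.
Definition cnt (u : NV) := cntP (Q u) (T (C u)).

Lemma hasT_norm v w t : hasT v t -> hasT w t -> forall g, f v g = f w g.
Proof.
move=> [x [Hx [s1 P1]]] [x' [Hx' [s2 P2]]] g.
apply: (same_tuple_norm Hfree (proj2_sig v) (proj2_sig w) Hx Hx' SG).
move=> s sS; exists (nth 1 t (index s S)).
have kl : index s S < size S by rewrite index_mem.
have e := nth_index 1 sS.
by split; [have := P1 _ kl | have := P2 _ kl]; rewrite e.
Qed.

Lemma hasT_ex v : exists t, hasT v t /\ t \in T (C v).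
Proof.
have bv := proj2_sig v; set H := proj1_sig v in bv *.
have [x Hx] := conjs_ex bv.
suff : forall S', {subset S' <= S} -> exists t, size t = size S' /\
   (forall k, k < size S' -> Ppsi H x (nth 1 S' k) (nth 1 t k)) /\ all (mem (W (C v))) t.
  move=> /(_ S (fun _ h => h)) [t [st [Pt At]]].
  exists t; split; first by exists x.
  by apply: allwP => //; rewrite st.
elim=> [|s S' IH] sub.
  by exists [::].
have [|t [st [Pt At]]] := IH.
  by move=> y yS; apply: sub; rewrite inE yS orbT.
have sS : s \in S by apply: sub; rewrite inE eqxx.
have [ws [rws [vws U]]] := bv.2.2 s.
exists (word_val (mapF (conjF x) ws) :: t); split; first by rewrite /= st.
split.
  case=> [|k] /= kl.
    by move=> w rw vw; rewrite (U w rw vw).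
  by apply: Pt.
rewrite /= At andbT; apply: map_f; apply: allwP.
  rewrite size_map.
  have := wl_eq bv.2 rws; rewrite vws => <-.
  rewrite -/(basis_norm H s) -/(f v s) -cvec_idx.
  exact: (@leq_bigmax _ (fun k : 'I_m => cvec (f v) k) (Ordinal (idx_S sS))).
apply/allP => q qm.
have [rG _] := map_reduced Hx rws.
have [Gq _] := rG q qm.
by case: q qm Gq => i y _ Gy; apply: AG.
Qed.

Lemma C_agree u v : agree m (cvec (f u)) (cvec (f v)) -> C u = C v.
Proof. by move=> ag; apply: eq_bigr => k _; apply: ag. Qed.

Lemma cnt_dec u v : nuclear_lt idx v u -> agree m (cvec (f v)) (cvec (f u)) -> cnt v < cnt u.
Proof.
move=> Rvu ag.
have [t0 [ht0 t0T]] := hasT_ex v.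
rewrite /cnt -(C_agree ag).
apply: (@cnt_lt _ (Q v) (Q u) _ t0) => //.
- move=> t _ [v' [ag' [R' h']]]; exists v'; split; last split => //.
    by move=> j jm; rewrite ag' // ag.
  exact: lex_trans R' Rvu.
- by exists v; split=> //.
- move=> [v' [_ [R' h']]].
  by apply: (lex_eq_irr (hasT_norm h' ht0)) R'.
Qed.

Lemma wf_nuclear : well_founded (nuclear_lt (Gs := Gs) idx).
Proof.
suff key : forall a, Acc (lexm m) a -> forall N (u : NV), agree m (cvec (f u)) a -> cnt u = N ->
    Acc (nuclear_lt (Gs := Gs) idx) u.
  by move=> u; apply: (key _ (wf_lexm m (cvec (f u))) (cnt u) u).
move=> a; elim=> {}a _ IH1 N; elim/ltn_ind: N => N IH2 u ag eN.
constructor=> v Rvu.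
have [l|ag'] := lexstep Rvu.
  apply: (IH1 (cvec (f v)) _ (cnt v) v) => //.
  by apply: lexm_agree ag l.
apply: (IH2 (cnt v) _ v) => //.
  by rewrite -eN; apply: cnt_dec.
by move=> j jm; rewrite ag' // ag.
Qed.

End Final.

Unset Implicit Arguments.
Close Scope group_scope.

Theorem proposition5p1 (G : groupType) (n : nat) (Gs : 'I_n -> G -> Prop)
  (Hfin : forall i, finite_pred (Gs i))
  (Hnt : forall i, nontrivial_pred (Gs i))
  (Hfree : free_product_decomp Gs)
  (idx : G -> nat) (Hidx : injective idx) :
  (* strict order *)
  (forall u : nuclear_vertex Gs, ~ nuclear_lt idx u u) /\
  (forall u v w : nuclear_vertex Gs,
      nuclear_lt idx u v -> nuclear_lt idx v w -> nuclear_lt idx u w) /\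
  (* total: distinct nuclear vertices are comparable *)
  (forall u v : nuclear_vertex Gs,
      [\/ nuclear_lt idx u v, nuclear_lt idx v u
        | same_basis (proj1_sig u) (proj1_sig v)]) /\
  (* well-founded *)
  well_founded (nuclear_lt (Gs := Gs) idx).
Proof.
split; [|split; [|split]].
- by move=> u; apply: lex_eq_irr.
- by move=> u v w h1 h2; exact: (lex_trans Hidx h1 h2).
- move=> u v; case: (lex_total idx (basis_norm (proj1_sig u)) (basis_norm (proj1_sig v))) => h.
  + by constructor 1.
  + by constructor 2.
  + by constructor 3; apply: (eqnorm_same Hfree (proj2_sig u) (proj2_sig v) h).
- exact: (wf_nuclear Hfin Hfree Hidx).
Qed.
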